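(* Let $\beta\in[0,1)$. If $\lambda$ is an eigenvalue of $\Delta_\beta$, then $\lambda>0$.
   Context: Tree: for an integer $m\ge2$, $\mathbb{T}_m$ has vertices the root $\emptyset$ and all finite sequences $(\emptyset,a_1,\dots,a_k)$, $a_i\in\{0,\dots,m-1\}$; $|x|$ is the level, successors of $x$ are $(x,i)$, $\hat x$ is the immediate predecessor of $x\ne\emptyset$. A branch is an infinite sequence $(x_n)_{n\ge0}$ with $x_0=\emptyset$, $x_{n+1}$ a successor of $x_n$; $\partial\mathbb{T}_m$ is the set of branches; $\lim_{x\to y}u(x)=\lim_n u(x_n)$ for $y=(x_n)$. Operator: $p_\beta=1$ if $\beta=0$, $p_\beta=\beta/(1-\beta)$ if $\beta\in(0,1)$. $\Delta_\beta u(\emptyset)=\frac1m\sum_{i=0}^{m-1}u(\emptyset,i)-u(\emptyset)$ and, for $x\ne\emptyset$, $\Delta_\beta u(x)=\big(\beta u(\hat x)+\frac{1-\beta}{m}\sum_{i=0}^{m-1}u(x,i)-u(x)\big)p_\beta^{-|x|}$. Eigenvalues: $\lambda\in\mathbb{R}$ is an eigenvalue of $\Delta_\beta$ if there is a bounded $u:\mathbb{T}_m\to\mathbb{R}$, $u\not\equiv0$, with $-\Delta_\beta u=\lambda u$ on $\mathbb{T}_m$ and $\lim_{x\to y}u(x)=0$ for every $y\in\partial\mathbb{T}_m$. *)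

(* Defs.v *)
From HB Require Import structures.
From mathcomp Require Import all_boot all_order all_algebra.
From mathcomp Require Import all_classical all_reals all_analysis.
Set Implicit Arguments. Unset Strict Implicit. Unset Printing Implicit Defensive.
Import Order.TTheory GRing.Theory Num.Theory.
Import numFieldNormedType.Exports.
Local Open Scope classical_set_scope.
Local Open Scope ring_scope.

(* A vertex (root, a_1, ..., a_k) is encoded as the
   REVERSED list [:: a_k; ...; a_1] of digits in 'I_m, so that
   - the root is [::],
   - the successor (x, i) is  i :: x,
   - the immediate predecessor of x <> root is  behead x,
   - the level |x| is  size x. *)
Definition vertex (m : nat) := seq 'I_m.

Fixpoint branch_vertex (m : nat) (b : nat -> 'I_m) (n : nat) : vertex m :=
  match n with
  | 0 => [::]
  | n'.+1 => b n' :: branch_vertex b n'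
  end.

Definition p_beta (R : realType) (beta : R) : R :=
  if beta == 0 then 1 else beta / (1 - beta).

Definition Delta_beta (R : realType) (m : nat) (beta : R)
    (u : vertex m -> R) (x : vertex m) : R :=
  match x with
  | [::] => (m%:R)^-1 * (\sum_(i < m) u [:: i]) - u [::]
  | _ :: x' =>
      (beta * u x' + (1 - beta) / m%:R * (\sum_(i < m) u (i :: x)) - u x)
        * ((p_beta beta) ^+ size x)^-1
  end.

(* lambda is an eigenvalue of Delta_beta on T_m (Dirichlet condition at
   every branch of the boundary) *)
Definition is_eigenvalue (R : realType) (m : nat) (beta lambda : R) : Prop :=
  exists u : vertex m -> R,
    [/\ (exists M : R, forall x, `|u x| <= M),
        (exists x, u x != 0),
        (forall x, - Delta_beta beta u x = lambda * u x) &
        (forall b : nat -> 'I_m,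
            (fun n => u (branch_vertex b n)) @ \oo --> (0 : R))].

(* Main.v *)
Require Import Defs.
From HB Require Import structures.
From mathcomp Require Import all_boot all_order all_algebra.
From mathcomp Require Import all_classical all_reals all_analysis.
From mathcomp Require Import lra.
Import Order.TTheory GRing.Theory Num.Theory.

Module Helpers.
Set Implicit Arguments. Unset Strict Implicit.
Import numFieldNormedType.Exports.
Local Open Scope classical_set_scope.
Local Open Scope ring_scope.
Lemma p_beta_gt0 (R : realType) (beta : R) : 0 <= beta -> beta < 1 -> 0 < p_beta beta.
Proof.
move=> b0 b1; rewrite /p_beta; case: eqP => [//|/eqP bn0].
apply: divr_gt0; last by rewrite subr_gt0.
by rewrite lt0r bn0.
Qed.

Lemma kstep (R : realType) (m : nat) (beta lambda : R) (u : vertex m -> R) z :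
  (0 < m)%N -> 0 <= beta -> beta < 1 -> lambda <= 0 ->
  (forall x, - Delta_beta beta u x = lambda * u x) ->
  0 < u z -> (if z is _ :: z' then u z' <= u z else True) ->
  m%:R * u z <= \sum_(i < m) u (i :: z).
Proof.
move=> m0 b0 b1 l0 eig uz0 good.
have m0R : (0 : R) < m%:R by rewrite ltr0n.
have lu : lambda * u z <= 0 by rewrite mulr_le0_ge0 // ltW.
have := eig z; case: z uz0 good lu => [|a z'] uz0 good lu /= E.
- have H : 0 <= m%:R^-1 * \sum_(i < m) u [:: i] - u [::].
    by rewrite -oppr_le0 E.
  rewrite subr_ge0 in H.
  have mi : 0 < m%:R^-1 :> R by rewrite invr_gt0.
  rewrite -(ler_pM2l mi) mulrA mulVf ?mul1r //.
  exact: lt0r_neq0.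
- set P := (p_beta beta ^+ (size z').+1)^-1 in E.
  have P0 : 0 < P by rewrite invr_gt0 exprn_gt0 // p_beta_gt0.
  set S := \sum_(i < m) u (i :: a :: z') in E *.
  have H : 0 <= (beta * u z' + (1 - beta) / m%:R * S - u (a :: z')).
    by rewrite -(pmulr_lge0 _ P0) -oppr_le0 E.
  have hb : beta * u z' <= beta * u (a :: z') by rewrite ler_wpM2l.
  have H2 : (1 - beta) * u (a :: z') <= (1 - beta) / m%:R * S.
    by rewrite mulrBl mul1r; move: H hb; lra.
  rewrite -mulrA ler_pM2l ?subr_gt0 // in H2.
  by rewrite mulrC -ler_pdivlMr // mulrC.
Qed.
Definition goodv {R : realType} {m} (u : vertex m -> R) (z : vertex m) : Prop :=
  if z is _ :: z' then u z' <= u z else True.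

Lemma exists_child (R : realType) (m : nat) (beta lambda : R) (u : vertex m -> R) z :
  (0 < m)%N -> 0 <= beta -> beta < 1 -> lambda <= 0 ->
  (forall x, - Delta_beta beta u x = lambda * u x) ->
  0 < u z -> goodv u z -> exists i : 'I_m, u z <= u (i :: z).
Proof.
move=> m0 b0 b1 l0 eig uz0 good.
have K := kstep m0 b0 b1 l0 eig uz0 good.
apply/not_existsP => /= H.
have H' : forall i : 'I_m, u (i :: z) < u z.
  by move=> i; rewrite ltNge; apply/negP => /(conj (H i)) [].
have : \sum_(i < m) u (i :: z) < \sum_(i < m) u z.
  apply: ltr_sum => // ; apply/hasP; exists (Ordinal m0) => //.
rewrite sumr_const card_ord -mulr_natl.
by rewrite ltNge mulr_natl -mulr_natl K.
Qed.

Lemma good_anc (R : realType) m (u : vertex m -> R) x :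
  0 < u x -> exists y, u x <= u y /\ goodv u y.
Proof.
elim: x => [|a x IH] ux; first by exists [::].
case: (lerP (u x) (u (a :: x))) => h; first by exists (a :: x).
have [y [h1 h2]] := IH (lt_trans ux h).
by exists y; split => //; apply: le_trans (ltW h) h1.
Qed.

Lemma main_pos (R : realType) (m : nat) (beta lambda : R) (u : vertex m -> R) :
  (0 < m)%N -> 0 <= beta -> beta < 1 -> lambda <= 0 ->
  (forall x, - Delta_beta beta u x = lambda * u x) ->
  (forall b : nat -> 'I_m,
            ((fun n => u (branch_vertex b n)) @ \oo --> (0 : R))%classic) ->
  forall x, 0 < u x -> False.
Proof.
move=> m0 b0 b1 l0 eig cv x ux.
have [y [uxy gy]] := good_anc ux.
have uy : 0 < u y by apply: lt_le_trans uxy.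
pose i0 := Ordinal m0.
pose step z := odflt i0 [pick i | u z <= u (i :: z)].
pose w := fix w n := match n with 0 => drop (size y) y
   | n'.+1 => if (n'.+1 <= size y)%N then drop (size y - n'.+1) y else step (w n') :: w n' end.
pose b n := head i0 (w n.+1).
have wle : forall n, (n <= size y)%N -> w n = drop (size y - n) y.
  by move=> [|n] hn /=; [rewrite subn0|rewrite hn].
have c1 : forall n, branch_vertex b n = w n.
  elim => [|n IH] /=; first by rewrite drop_size.
  rewrite IH /b /=; case: ifP => // hn.
  rewrite (wle n (ltnW hn)) (drop_nth i0) ?subnSK //=.
    by rewrite ?subnSK // leq_subr.
have c2 : forall k, u y <= u (w (size y + k)%N) /\ goodv u (w (size y + k)%N).
  elim => [|k [IH1 IH2]]; first by rewrite addn0 wle // subnn drop0.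
  rewrite addnS /=; case: ifP => [|_]; first by rewrite ltnNge leq_addr.
  have [i hi] := exists_child m0 b0 b1 l0 eig (lt_le_trans uy IH1) IH2.
  rewrite /step; case: pickP => [j hj|/(_ i)]; last by rewrite hi.
  by split => //; apply: le_trans IH1 hj.
have := cv b; move/cvgr0Pnorm_lt => /(_ _ uy) [N _ HN].
have := HN (size y + N)%N; rewrite /= leq_addl => /(_ isT).
rewrite c1; have [h _] := c2 N.
rewrite ltNge => /negP; apply; rewrite ger0_norm //.
by apply: le_trans h; apply: ltW.
Qed.
End Helpers.
Import Helpers.
Local Open Scope ring_scope.
Theorem lemma3p1 (R : realType) (m : nat) (beta lambda : R) :
  (2 <= m)%N -> 0 <= beta -> beta < 1 ->
  is_eigenvalue m beta lambda -> 0 < lambda.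
Proof.
move=> m2 b0 b1 [u [_ [x ux] eig cv]].
have m0 : (0 < m)%N by apply: leq_trans m2.
rewrite ltNge; apply/negP => l0.
case: (ltrgtP (u x) 0) ux => // [un|up] _; last first.
  exact: (main_pos m0 b0 b1 l0 eig cv up).
apply: (@main_pos R m beta lambda (fun z => - u z) m0 b0 b1 l0 _ _ x).
- move=> z; rewrite mulrN -eig; congr (- _).
  case: z => [|a z] /=; rewrite sumrN; lra.
- by move=> b; rewrite -oppr0; apply: cvgN (cv b).
- by rewrite oppr_gt0.
Qed.
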